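(* Let $G\le\mathrm{O}(d)$ have closed orbits. For all $x,y\in\mathbb{R}^d$ there exists a bijection from $C([x],[y])$ to the set of orbits of the group $\mathrm{stab}_G(x)$ acting on $\arg\min_{q\in[y]}\|q-x\|$.
   Context: For $x\in\mathbb{R}^d$, $[x]:=\{gx:g\in G\}$, and $\mathbb{R}^d/G$ has the quotient metric $d([x],[y]):=\inf_{p\in[x],q\in[y]}\|p-q\|$. In a metric space $(M,d)$, a curve $\gamma:[0,L]\to M$ with $L\ge0$ is a minimal geodesic if $d(\gamma(s),\gamma(t))=|s-t|$ for all $s,t\in[0,L]$; for $a,b\in M$, $C(a,b)$ is the set of minimal geodesics $\gamma$ with $\gamma(0)=a$ and $\gamma(L)=b$ (so $L=d(a,b)$). The group $\mathrm{stab}_G(x)$ acts on $\arg\min_{q\in[y]}\|q-x\|$ by $q\mapsto gq$. *)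

(* Defs.v *)
From mathcomp Require Import all_boot all_order all_algebra.
From mathcomp Require Import all_classical reals.
Set Implicit Arguments. Unset Strict Implicit. Unset Printing Implicit Defensive.
Import Order.TTheory GRing.Theory Num.Theory.
Local Open Scope classical_set_scope.
Local Open Scope ring_scope.

Section Defs.
Variables (R : realType) (d : nat).

(* R^d as column vectors; G acts by left matrix multiplication. *)
Definition enorm (v : 'cV[R]_d) : R := Num.sqrt (\sum_(i < d) v i 0 ^+ 2).

Definition orthogonal_mx (g : 'M[R]_d) : Prop := g^T *m g = 1%:M.

Definition subgroup_Od (G : set 'M[R]_d) : Prop :=
  [/\ (forall g, G g -> orthogonal_mx g), G 1%:M,
      (forall g h, G g -> G h -> G (g *m h)) &
      (forall g, G g -> G (g^T))].

Definition gorbit (G : set 'M[R]_d) (x : 'cV[R]_d) : set 'cV[R]_d :=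
  [set g *m x | g in G].

Definition eclosed (S : set 'cV[R]_d) : Prop :=
  forall z, (forall e : R, 0 < e -> exists p, S p /\ enorm (p - z) < e) -> S z.

Definition closed_orbits (G : set 'M[R]_d) : Prop :=
  forall x, eclosed (gorbit G x).

(* points of R^d/G are orbits *)
Definition is_orbit (G : set 'M[R]_d) (S : set 'cV[R]_d) : Prop :=
  exists x, S = gorbit G x.

Definition qdist (S T : set 'cV[R]_d) : R :=
  inf [set r | exists p q, S p /\ T q /\ r = enorm (p - q)].

Definition Icc (L : R) := {t : R | 0 <= t <= L}.

Definition min_geodesic (G : set 'M[R]_d) (L : R)
    (gam : Icc L -> set 'cV[R]_d) : Prop :=
  (forall t, is_orbit G (gam t)) /\
  (forall s t : Icc L, qdist (gam s) (gam t) = `|sval s - sval t|).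

Definition geodesics (G : set 'M[R]_d) (a b : set 'cV[R]_d)
    : set (Icc (qdist a b) -> set 'cV[R]_d) :=
  [set gam | min_geodesic G gam /\
     (forall t : Icc (qdist a b), sval t = 0 -> gam t = a) /\
     (forall t : Icc (qdist a b), sval t = qdist a b -> gam t = b)].

Definition stab (G : set 'M[R]_d) (x : 'cV[R]_d) : set 'M[R]_d :=
  [set g | G g /\ g *m x = x].

Definition argmin_orbit (G : set 'M[R]_d) (x y : 'cV[R]_d) : set 'cV[R]_d :=
  [set q | gorbit G y q /\
     (forall q', gorbit G y q' -> enorm (q - x) <= enorm (q' - x))].

Definition stab_orbits (G : set 'M[R]_d) (x y : 'cV[R]_d)
    : set (set 'cV[R]_d) :=
  [set O | exists q, argmin_orbit G x y q /\ O = [set g *m q | g in stab G x]].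

End Defs.
Arguments geodesics {R d} G a b.

(* Main.v *)
From mathcomp Require Import all_boot all_order all_algebra.
From mathcomp Require Import all_classical reals.
From mathcomp Require Import topology normedtype derive realfun.
From mathcomp Require Import ring lra.
Require Import Defs.
Import Order.TTheory GRing.Theory Num.Theory.
Local Open Scope classical_set_scope.
Local Open Scope ring_scope.
Import numFieldNormedType.Exports.

Section Vec.
Variables (R : realType) (d : nat).
Local Notation V := 'cV[R]_d.
Implicit Types u v w : V.

Definition dot u v : R := \sum_(i < d) u i 0 * v i 0.

Lemma dotvv_ge0 u : 0 <= dot u u.
Proof. by apply: sumr_ge0 => i _; rewrite -expr2 sqr_ge0. Qed.

Lemma enormE u : enorm u = Num.sqrt (dot u u).
Proof. by rewrite /enorm /dot; congr Num.sqrt; apply: eq_bigr => i _; rewrite expr2. Qed.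

Lemma enorm_ge0 u : 0 <= enorm u.
Proof. exact: sqrtr_ge0. Qed.

Lemma enorm_sq u : enorm u ^+ 2 = dot u u.
Proof. by rewrite enormE sqr_sqrtr // dotvv_ge0. Qed.

Lemma dot0P u : dot u u = 0 -> u = 0.
Proof.
move=> /eqP; rewrite psumr_eq0; last by move=> i _; rewrite -expr2 sqr_ge0.
move=> /allP H; apply/matrixP => i j; rewrite ord1 mxE.
have := H i (mem_index_enum i); rewrite /= mulf_eq0 orbb.
by move/eqP.
Qed.

Lemma enorm0P u : enorm u = 0 -> u = 0.
Proof. by move=> H; apply: dot0P; rewrite -enorm_sq H expr0n. Qed.

Lemma enorm0 : enorm (0 : V) = 0.
Proof. by rewrite enormE /dot big1 ?sqrtr0 // => i _; rewrite mxE mul0r. Qed.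

Lemma dotC u v : dot u v = dot v u.
Proof. by apply: eq_bigr => i _; rewrite mulrC. Qed.

Lemma dot_quad a b u v :
  dot (a *: u + b *: v) (a *: u + b *: v) =
  a ^+ 2 * dot u u + 2 * a * b * dot u v + b ^+ 2 * dot v v.
Proof.
rewrite /dot !mulr_sumr -!big_split /=; apply: eq_bigr => i _; rewrite !mxE; ring.
Qed.

Lemma addv_scale u v : u + v = 1 *: u + 1 *: v.
Proof. by rewrite !scale1r. Qed.

Lemma enormZ c u : enorm (c *: u) = `|c| * enorm u.
Proof.
have -> : c *: u = c *: u + 0 *: u by rewrite scale0r addr0.
rewrite !enormE dot_quad !expr0n /= !mulr0 !mul0r !addr0.
by rewrite sqrtrM ?sqr_ge0 // sqrtr_sqr.
Qed.

Lemma enormN u : enorm (- u) = enorm u.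
Proof. by rewrite -scaleN1r enormZ normrN normr1 mul1r. Qed.

Lemma enormB u v : enorm (u - v) = enorm (v - u).
Proof. by rewrite -enormN opprB. Qed.

Lemma dot_le u v : dot u v <= enorm u * enorm v.
Proof.
set a := enorm u; set b := enorm v.
have := dotvv_ge0 (b *: u + (- a) *: v).
rewrite dot_quad -!enorm_sq -/a -/b => H.
have [a0|] := eqVneq a 0.
  rewrite /a in a0; rewrite /a (enorm0P _ a0) enorm0 mul0r /dot big1 // => i _.
  by rewrite mxE mul0r.
have [b0|] := eqVneq b 0.
  rewrite /b in b0; rewrite /b (enorm0P _ b0) enorm0 mulr0 /dot big1 // => i _.
  by rewrite mxE mulr0.
move=> bn an.
have ha : 0 < a by rewrite lt_def an enorm_ge0.
have hb : 0 < b by rewrite lt_def bn enorm_ge0.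
have hab : 0 < a * b by apply: mulr_gt0.
nra.
Qed.

Lemma enorm_triangle u v : enorm (u + v) <= enorm u + enorm v.
Proof.
have h1 := enorm_ge0 (u + v); have h2 := enorm_ge0 u; have h3 := enorm_ge0 v.
have H : enorm (u + v) ^+ 2 <= (enorm u + enorm v) ^+ 2.
  rewrite addv_scale enorm_sq dot_quad !expr1n !mul1r mulr1 -!enorm_sq.
  have := dot_le u v; nra.
nra.
Qed.

Lemma enorm_tri3 (a b c : V) : enorm (c - a) <= enorm (b - a) + enorm (c - b).
Proof.
have -> : c - a = (b - a) + (c - b) by apply/matrixP => i j; rewrite !mxE; ring.
exact: enorm_triangle.
Qed.

Lemma collinear u v al be :
  enorm u = al -> enorm v = be -> al + be <= enorm (u + v) ->
  be *: u = al *: v.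
Proof.
move=> Hu Hv H.
have ha : 0 <= al by rewrite -Hu enorm_ge0.
have hb : 0 <= be by rewrite -Hv enorm_ge0.
have H2 : (al + be) ^+ 2 <= enorm (u + v) ^+ 2.
  by rewrite lerXn2r // ?nnegrE ?addr_ge0 ?enorm_ge0.
move: H2; rewrite addv_scale enorm_sq dot_quad !expr1n !mul1r mulr1 -!enorm_sq Hu Hv => H2.
have H3 := dotvv_ge0 (be *: u + (- al) *: v).
have H4 : dot (be *: u + (- al) *: v) (be *: u + (- al) *: v) <= 0.
  rewrite dot_quad -!enorm_sq Hu Hv.
  have hab : 0 <= al * be by apply: mulr_ge0.
  nra.
have /dot0P : dot (be *: u + (- al) *: v) (be *: u + (- al) *: v) = 0.
  by apply/eqP; rewrite eq_le H4 H3.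
by rewrite scaleNr => /eqP; rewrite subr_eq0 => /eqP.
Qed.

Lemma dot_mx u v : dot u v = (u^T *m v) 0 0.
Proof. by rewrite mxE; apply: eq_bigr => i _; rewrite mxE. Qed.

Lemma enorm_orth (g : 'M[R]_d) u : orthogonal_mx g -> enorm (g *m u) = enorm u.
Proof.
move=> Hg; rewrite !enormE !dot_mx trmx_mul -mulmxA (mulmxA g^T) Hg mul1mx //.
Qed.

End Vec.

Section Grp.
Variables (R : realType) (d : nat) (G : set 'M[R]_d).
Hypothesis HG : subgroup_Od G.
Local Notation V := 'cV[R]_d.

Lemma G_orth {g} : G g -> orthogonal_mx g.
Proof. by case: HG => H _ _ _; apply: H. Qed.
Lemma G1 : G 1%:M.
Proof. by case: HG. Qed.
Lemma GM {g h} : G g -> G h -> G (g *m h).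
Proof. by case: HG => _ _ H _; apply: H. Qed.
Lemma GT {g} : G g -> G g^T.
Proof. by case: HG => _ _ _ H; apply: H. Qed.
Lemma G_orth' {g} : G g -> g *m g^T = 1%:M.
Proof. by move=> /GT /G_orth; rewrite /orthogonal_mx trmxK. Qed.

Lemma enormG {g} (u : V) : G g -> enorm (g *m u) = enorm u.
Proof. by move=> /G_orth; apply: enorm_orth. Qed.

Lemma orbit_self (a : V) : gorbit G a a.
Proof. by exists 1%:M; [exact: G1 | rewrite mul1mx]. Qed.

Lemma orbit_mem g (a : V) : G g -> gorbit G a (g *m a).
Proof. by move=> Gg; exists g. Qed.

Lemma orbit_eq {a b : V} : gorbit G b a -> gorbit G a = gorbit G b.
Proof.
case=> h Gh <-; apply/seteqP; split => _ [g Gg <-].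
  by exists (g *m h); [exact: GM | rewrite mulmxA].
exists (g *m h^T); first by apply: GM => //; exact: GT.
by rewrite -mulmxA (mulmxA h^T) (G_orth Gh) mul1mx.
Qed.

Lemma entry_le (w : V) i : `|w i 0| <= enorm w.
Proof.
rewrite -sqrtr_sqr enormE ler_sqrt ?dotvv_ge0 // /dot (bigD1 i) //= expr2.
by rewrite lerDl sumr_ge0 // => j _; rewrite -expr2 sqr_ge0.
Qed.

Lemma cont_sum (T : topologicalType) (F : 'I_d -> T -> R) :
  (forall i, continuous (F i)) -> continuous (fun v => \sum_(i < d) F i v).
Proof.
move=> Fc.
have H : forall r : seq 'I_d, continuous (fun v => \sum_(i <- r) F i v).
  elim => [|a r IH].
    have -> : (fun v => \sum_(i <- [::]) F i v) = (fun=> 0).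
      by apply: funext => w; rewrite big_nil.
    exact: cst_continuous.
  have -> : (fun v => \sum_(i <- a :: r) F i v) =
            (fun v => F a v + \sum_(i <- r) F i v).
    by apply: funext => w; rewrite big_cons.
  move=> v; exact: (cvgD (Fc a v) (IH v)).
exact: H.
Qed.

Hypothesis Hcl : closed_orbits G.

Lemma attain (a b : V) : exists q, gorbit G b q /\
  forall q', gorbit G b q' -> enorm (a - q) <= enorm (a - q').
Proof.
pose A := [set v : 'rV[R]_d | gorbit G b v^T].
pose f := fun v : 'rV[R]_d => enorm (a - v^T).
have A0 : A !=set0 by exists b^T; rewrite /A /= trmxK; exact: orbit_self.
have Ab : bounded_set A.
  rewrite /bounded_near; apply: filterS (nbhs_pinfty_ge (num_real (enorm b))).
  move=> M hM v Av; apply: le_trans hM.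
  rewrite (_ : `|v| = mx_norm v) // mx_normrE; apply: bigmax_le => [|[i j] _]; first exact: enorm_ge0.
  rewrite /= ord1; move: Av; rewrite /A /= => -[g Gg Hv].
  by have := entry_le v^T j; rewrite {1}mxE -Hv enormG //.
have Acl : closed A.
  move=> z Hz; rewrite /A /=; apply: (Hcl b) => e e0.
  pose del := e / (d%:R + 1).
  have del0 : 0 < del by rewrite divr_gt0 // ltr_wpDl.
  have [v [Av Bv]] := Hz _ (nbhsx_ballx z del del0).
  exists v^T; split => //.
  move: Bv; rewrite mx_norm_ball /ball_ /= => Bv.
  have Hi : forall i, `|(v^T - z^T) i 0| <= del.
    move=> i; apply/ltW/(le_lt_trans _ Bv).
    rewrite (_ : `|z - v| = mx_norm (z - v)) // mx_normrE.
    rewrite !mxE -normrN opprB.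
    apply: le_trans (le_bigmax _ _ (ord0, i)); rewrite /= !mxE.
    by [].
  rewrite enormE -(gtr0_norm e0) -sqrtr_sqr ltr_sqrt ?exprn_gt0 //.
  have hn : 0 <= (d%:R : R) by [].
  have he : e = del * (d%:R + 1) by rewrite /del mulfVK // gt_eqF // ltr_wpDl.
  apply: (le_lt_trans (y := \sum_(i < d) del * del)).
    apply: ler_sum => i _; have := Hi i; rewrite ler_norml => /andP[h1 h2]; nra.
  rewrite sumr_const card_ord -mulr_natl he; nra.
have fc : {within A, continuous f}.
  apply: continuous_subspaceT.
  have -> : f = Num.sqrt \o (fun v => \sum_(i < d) (a i 0 - v 0 i) ^+ 2).
    apply: funext => v; rewrite /f /enorm /=; congr Num.sqrt.
    by apply: eq_bigr => i _; rewrite !mxE.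
  move=> v; apply: continuous_comp; last exact: sqrt_continuous.
  apply: cont_sum => i w.
  have -> : (fun v : 'rV[R]_d => (a i 0 - v 0 i) ^+ 2) =
     (fun v => (a i 0 - v 0 i) * (a i 0 - v 0 i)).
    by apply: funext => u; rewrite expr2.
  have hh : {for w, continuous (fun v : 'rV[R]_d => a i 0 - v 0 i)}.
    exact: (cvgB (@cst_continuous _ _ (a i 0) w) (@coord_continuous R 1 d 0 i w)).
  exact: (cvgM hh hh).
have Acp : compact A by exact: bounded_closed_compact.
have [c Ac Hc] := compact_EVT_min A0 Acp fc.
exists c^T; split; first by move: Ac; rewrite inE.
move=> q' Hq'; have := Hc q'^T; rewrite /f trmxK; apply.
by rewrite inE /A /= trmxK.
Qed.

Lemma qdist_le {S T : set V} {p q} : S p -> T q -> qdist S T <= enorm (p - q).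
Proof.
move=> Sp Tq; rewrite /qdist.
set E := [set r | _].
have hE : has_lbound E.
  by exists 0 => r [p' [q' [_ [_ ->]]]]; exact: enorm_ge0.
by apply: (ge_inf hE); exists p, q.
Qed.

Lemma qdist_attain (a b : V) : exists q, gorbit G b q /\
  qdist (gorbit G a) (gorbit G b) = enorm (a - q).
Proof.
have [q [Hq Hmin]] := attain a b.
exists q; split => //; apply/eqP; rewrite eq_le; apply/andP; split.
  exact: qdist_le (orbit_self a) Hq.
apply: lb_le_inf.
  by exists (enorm (a - q)); exists a; exists q; split; [exact: orbit_self | split].
move=> r [p [q' [[g Gg <-] [Hq' ->]]]].
rewrite -(enormG (g *m a - q') (GT Gg)) mulmxBr mulmxA (G_orth Gg) mul1mx.
apply: Hmin; case: Hq' => h Gh <-.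
by exists (g^T *m h); [apply: GM => //; exact: GT | rewrite mulmxA].
Qed.

Lemma qdist_ge0 (a b : V) : 0 <= qdist (gorbit G a) (gorbit G b).
Proof. by have [q [_ ->]] := qdist_attain a b; exact: enorm_ge0. Qed.

Lemma qdistC (S T : set V) : qdist S T = qdist T S.
Proof.
rewrite /qdist; congr inf; apply/seteqP; split => r [p [q [Sp [Tq ->]]]];
  by exists q, p; split => //; split => //; rewrite enormB.
Qed.

Lemma qdist_tri (a b c : V) :
  qdist (gorbit G a) (gorbit G c) <=
  qdist (gorbit G a) (gorbit G b) + qdist (gorbit G b) (gorbit G c).
Proof.
have [b' [Hb' ->]] := qdist_attain a b.
rewrite -(orbit_eq Hb').
have [c' [Hc' ->]] := qdist_attain b' c.
apply: le_trans (qdist_le (orbit_self a) Hc') _.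
by rewrite [X in _ <= X]addrC; apply: enorm_tri3.
Qed.

Lemma qdist_self (a : V) : qdist (gorbit G a) (gorbit G a) = 0.
Proof.
apply/eqP; rewrite eq_le qdist_ge0 andbT.
by have := qdist_le (orbit_self a) (orbit_self a); rewrite subrr enorm0.
Qed.

Lemma col3 {a b c : V} {al} : enorm (b - a) = al -> enorm (c - b) = al -> 0 < al ->
  al + al <= enorm (c - a) -> b - a = c - b.
Proof.
move=> H1 H2 H3 H4.
have E : c - a = (b - a) + (c - b) by apply/matrixP => i j; rewrite !mxE; ring.
rewrite E in H4; have := @collinear R d _ _ _ _ H1 H2 H4.
by apply: scalerI; rewrite gt_eqF.
Qed.


Variables x y : V.
Local Notation L := (qdist (gorbit G x) (gorbit G y)).

Definition path (q : V) (t : R) : V := x + (t / L) *: (q - x).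
Definition gamma (q : V) : Icc L -> set V := fun t => gorbit G (path q (sval t)).
Definition mkI {t : R} (H : 0 <= t <= L) : Icc L := exist _ t H.

Lemma L_ge0 : 0 <= L.
Proof. exact: qdist_ge0. Qed.

Lemma argmin_L {q} : argmin_orbit G x y q -> enorm (q - x) = L.
Proof.
move=> [Hq Hmin]; have [q0 [Hq0 HL]] := qdist_attain x y.
apply/eqP; rewrite eq_le; apply/andP; split.
  by rewrite HL [enorm (x - q0)]enormB; apply: Hmin.
by rewrite enormB; apply: qdist_le (orbit_self x) Hq.
Qed.

Lemma path0 q : path q 0 = x.
Proof. by rewrite /path mul0r scale0r addr0. Qed.

Lemma pathL {q} : argmin_orbit G x y q -> path q L = q.
Proof.
move=> Hq; have := argmin_L Hq; rewrite /path.
have [->|L0] := eqVneq L 0.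
  move/enorm0P => /eqP; rewrite subr_eq0 => /eqP ->.
  by rewrite subrr scaler0 addr0.
by move=> _; rewrite divff // scale1r addrC subrK.
Qed.

Lemma path_diff q s t : path q s - path q t = ((s - t) / L) *: (q - x).
Proof. by apply/matrixP => i j; rewrite !mxE; ring. Qed.

Lemma path_dist {q} s t : argmin_orbit G x y q -> 0 < L ->
  enorm (path q s - path q t) = `|s - t|.
Proof.
move=> Hq L0; rewrite path_diff enormZ (argmin_L Hq) normrM normfV.
by rewrite (gtr0_norm L0) mulfVK // gt_eqF.
Qed.

Lemma gamma_geo q : argmin_orbit G x y q ->
  geodesics G (gorbit G x) (gorbit G y) (gamma q).
Proof.
move=> Hq; have Hqy : gorbit G y q by case: Hq.
split; [split|split].
- by move=> t; exists (path q (sval t)).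
- have [L0|Lpos] := eqVneq L 0.
    move=> [s Hs] [t Ht] /=.
    have s0 : s = 0 by move: Hs; rewrite L0 => /andP[h1 h2]; apply/eqP; rewrite eq_le h1 h2.
    have t0 : t = 0 by move: Ht; rewrite L0 => /andP[h1 h2]; apply/eqP; rewrite eq_le h1 h2.
    by rewrite /gamma /= s0 t0 qdist_self subrr normr0.
  have Lp : 0 < L by rewrite lt_def Lpos L_ge0.
  have key : forall s t : Icc L, sval s <= sval t ->
      qdist (gamma q s) (gamma q t) = `|sval s - sval t|.
    move=> [s Hs] [t Ht] /= st; rewrite /gamma /=.
    move: Hs Ht => /andP[s0 sL] /andP[t0 tL].
    apply/eqP; rewrite eq_le; apply/andP; split.
      by rewrite -(path_dist s t Hq Lp); apply: qdist_le; exact: orbit_self.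
    have h1 := qdist_tri x (path q s) y.
    have h2 := qdist_tri (path q s) (path q t) y.
    have h3 : qdist (gorbit G x) (gorbit G (path q s)) <= s.
      have E : enorm (path q 0 - path q s) = s.
        by rewrite (path_dist 0 s Hq Lp) sub0r normrN ger0_norm.
      rewrite path0 in E.
      by apply: (le_trans (qdist_le (orbit_self x) (orbit_self (path q s)))); rewrite E.
    have h4 : qdist (gorbit G (path q t)) (gorbit G y) <= L - t.
      have E : enorm (path q t - path q L) = L - t.
        by rewrite (path_dist t L Hq Lp) ler0_norm ?subr_le0 // opprB.
      rewrite (pathL Hq) in E.
      by apply: (le_trans (qdist_le (orbit_self (path q t)) Hqy)); rewrite E.
    rewrite ler0_norm ?subr_le0 // opprB.
    lra.
  move=> s t; have [st|ts] := leP (sval s) (sval t); first exact: key.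
  by rewrite qdistC distrC; apply: key; apply: ltW.
- by move=> t Ht0; rewrite /gamma Ht0 path0.
- move=> t Ht0; rewrite /gamma Ht0 pathL //.
  exact: orbit_eq.
Qed.


Lemma gamma_stab q g : stab G x g -> gamma (g *m q) = gamma q.
Proof.
move=> [Gg gx]; apply: funext => t; rewrite /gamma.
have -> : path (g *m q) (sval t) = g *m path q (sval t).
  by rewrite /path mulmxDr -scalemxAr mulmxBr gx.
exact: orbit_eq (orbit_mem _ _ Gg).
Qed.

Lemma Lhalf : 0 < L -> 0 <= L / 2 <= L.
Proof. by move=> Lp; apply/andP; split; lra. Qed.

Lemma orbit_y_mem {q g} : gorbit G y q -> G g -> gorbit G y (g *m q).
Proof.
by move=> [h Gh <-] Gg; exists (g *m h); [exact: GM | rewrite mulmxA].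
Qed.

Lemma gamma_inj q q' : argmin_orbit G x y q -> argmin_orbit G x y q' ->
  gamma q = gamma q' -> exists g, stab G x g /\ q = g *m q'.
Proof.
move=> Hq Hq' Hgam.
have Hqy : gorbit G y q by case: Hq.
have Hqy' : gorbit G y q' by case: Hq'.
have [L0|Lpos] := eqVneq L 0.
  exists 1%:M; split; first by split; [exact: G1 | rewrite mul1mx].
  have := argmin_L Hq; have := argmin_L Hq'; rewrite L0.
  move=> /enorm0P /eqP; rewrite subr_eq0 => /eqP ->.
  by move=> /enorm0P /eqP; rewrite subr_eq0 => /eqP ->; rewrite mul1mx.
have Lp : 0 < L by rewrite lt_def Lpos L_ge0.
have H := congr1 (fun f : Icc L -> set V => f (mkI (Lhalf Lp))) Hgam; rewrite /gamma /= in H.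
have : gorbit G (path q' (L/2)) (path q (L/2)) by rewrite -H; exact: orbit_self.
case=> g Gg Hg.
have hh : L / 2 / L = 1 / 2 by field; rewrite gt_eqF.
have d1 : enorm (path q (L/2) - x) = L / 2.
  by have := path_dist (L/2) 0 Hq Lp; rewrite path0 subr0 gtr0_norm ?divr_gt0.
have d2 : enorm (q - path q (L/2)) = L / 2.
  have := path_dist L (L/2) Hq Lp; rewrite (pathL Hq) => ->.
  by rewrite (_ : L - L/2 = L/2) ?gtr0_norm ?divr_gt0 //; field.
have d1' : enorm (x - path q' (L/2)) = L / 2.
  have := path_dist 0 (L/2) Hq' Lp; rewrite path0 => ->.
  by rewrite sub0r normrN gtr0_norm ?divr_gt0.
have d2' : enorm (q' - path q' (L/2)) = L / 2.
  have := path_dist L (L/2) Hq' Lp; rewrite (pathL Hq') => ->.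
  by rewrite (_ : L - L/2 = L/2) ?gtr0_norm ?divr_gt0 //; field.
have E1 : path q (L/2) - x = g *m q' - path q (L/2).
  apply: (col3 d1) => //; first by rewrite -Hg -mulmxBr enormG.
    by rewrite divr_gt0.
  rewrite enormB (_ : L/2 + L/2 = L); last by field.
  exact: qdist_le (orbit_self x) (orbit_y_mem Hqy' Gg).
have E2 : path q (L/2) - q = g *m x - path q (L/2).
  apply: (col3 (al := L/2)) => //; first by rewrite enormB.
    by rewrite -Hg -mulmxBr enormG.
    by rewrite divr_gt0.
  rewrite (_ : L/2 + L/2 = L); last by field.
  exact: qdist_le (orbit_mem _ _ Gg) Hqy.
have hm : path q (L/2) = x + (1/2) *: (q - x) by rewrite /path hh.
rewrite hm in E1 E2.
have Ew1 : forall w : V, x + (1/2) *: (q - x) - x = w - (x + (1/2) *: (q - x)) -> q = w.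
  move=> w E; apply/matrixP => i j; move/matrixP: E => /(_ i j); rewrite !mxE => E; lra.
have Ew2 : forall w : V, x + (1/2) *: (q - x) - q = w - (x + (1/2) *: (q - x)) -> x = w.
  move=> w E; apply/matrixP => i j; move/matrixP: E => /(_ i j); rewrite !mxE => E; lra.
exists g; split; last exact: Ew1 _ E1.
by split => //; apply/esym/Ew2.
Qed.


Lemma geo_gamma (gam : Icc L -> set V) :
  geodesics G (gorbit G x) (gorbit G y) gam ->
  exists q, argmin_orbit G x y q /\ gam = gamma q.
Proof.
move=> [[Horb Hdist] [H0 HL]].
have hZ : (0:R) <= 0 <= L by apply/andP; split; [exact: lexx | exact: L_ge0].
have hE : 0 <= L <= L by apply/andP; split; [exact: L_ge0 | exact: lexx].
have gZ : gam (mkI hZ) = gorbit G x by apply: H0.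
have gE : gam (mkI hE) = gorbit G y by apply: HL.
have [L0|Lpos] := eqVneq L 0.
  have [q0 [Hq0 Hx]] := qdist_attain x y.
  have xq0 : x = q0.
    by move: Hx; rewrite L0 => /esym /enorm0P /eqP; rewrite subr_eq0 => /eqP.
  exists x; split.
    split; first by rewrite xq0.
    by move=> q' _; rewrite subrr enorm0 enorm_ge0.
  apply: funext => t; rewrite /gamma.
  have t0 : sval t = 0.
    by case: t => t /=; rewrite L0 => /andP[h1 h2]; apply/eqP; rewrite eq_le h1 h2.
  by rewrite H0 // t0 path0.
have Lp : 0 < L by rewrite lt_def Lpos L_ge0.
pose T0 := mkI (Lhalf Lp).
have [m0 Hm0] := Horb T0.
have dxm0 : qdist (gorbit G x) (gorbit G m0) = L / 2.
  have := Hdist (mkI hZ) T0; rewrite gZ Hm0 /= => ->.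
  by rewrite sub0r normrN gtr0_norm // divr_gt0.
have [m [Hm Hxm]] := qdist_attain x m0.
have Hm0' : gam T0 = gorbit G m by rewrite Hm0 (orbit_eq Hm).
have dmy : qdist (gorbit G m) (gorbit G y) = L / 2.
  have := Hdist T0 (mkI hE); rewrite gE Hm0' /= => ->.
  by rewrite (_ : L/2 - L = - (L/2)); [rewrite normrN gtr0_norm // divr_gt0 | field].
have [q [Hq Hmq]] := qdist_attain m y.
have d1 : enorm (m - x) = L / 2 by rewrite enormB -Hxm.
have d2 : enorm (q - m) = L / 2 by rewrite enormB -Hmq.
have Lxq : L <= enorm (q - x).
  by rewrite enormB; exact: qdist_le (orbit_self x) Hq.
have Em : m - x = q - m.
  apply: (col3 d1 d2); first by rewrite divr_gt0.
  by rewrite (_ : L/2 + L/2 = L) //; field.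
have Hqa : argmin_orbit G x y q.
  split => // q' Hq'.
  apply: (le_trans (y := L)).
    by have := @enorm_tri3 R d x m q; rewrite d1 d2 (_ : L/2 + L/2 = L) //; field.
  by rewrite enormB; exact: qdist_le (orbit_self x) Hq'.
exists q; split => //.
apply: funext => s; rewrite /gamma.
have [r0 Hr0] := Horb s; rewrite Hr0.
suff [r [Hr <-]] : exists r, gorbit G r0 r /\ r = path q (sval s).
  by rewrite (orbit_eq Hr).
have /andP[s0 sL] := svalP s.
set sv := sval s in s0 sL *.
have dmr0 : qdist (gorbit G m) (gorbit G r0) = `|L / 2 - sv|.
  by have := Hdist T0 s; rewrite Hm0' Hr0.
have [sh|sh] := lerP sv (L/2).
- have [r [Hr Hmr]] := qdist_attain m r0.
  rewrite dmr0 ger0_norm ?subr_ge0 // in Hmr.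
  have drx : qdist (gorbit G r) (gorbit G x) = sv.
    have := Hdist s (mkI hZ); rewrite Hr0 gZ /= (orbit_eq Hr) => ->.
    by rewrite subr0 ger0_norm.
  have [x2 [Hx2 Hrx]] := qdist_attain r x.
  rewrite drx in Hrx.
  have Lx2 : L <= enorm (q - x2).
    by rewrite enormB; exact: qdist_le Hx2 Hq.
  have t1 := @enorm_tri3 R d x2 r m.
  have t2 := @enorm_tri3 R d x2 m q.
  rewrite enormB -Hrx enormB -Hmr in t1.
  rewrite d2 in t2.
  have d3 : enorm (m - x2) = L / 2 by lra.
  have Ex2 : m - x2 = q - m.
    apply: (col3 d3 d2); first by rewrite divr_gt0.
    by rewrite (_ : L/2 + L/2 = L) //; field.
  have ex2 : x2 = x.
    apply/matrixP => i j; move/matrixP: Ex2 => /(_ i j); move/matrixP: Em => /(_ i j).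
    rewrite !mxE => h1 h2; lra.
  rewrite ex2 in Hrx.
  have C := @collinear R d (r - x) (m - r) sv (L/2 - sv).
  have := C (esym Hrx) (esym Hmr).
  rewrite (_ : r - x + (m - r) = m - x); last by apply/matrixP => i j; rewrite !mxE; ring.
  rewrite d1 (_ : sv + (L/2 - sv) = L/2); last by ring.
  move=> /(_ (lexx _)) Ec.
  exists r; split => //.
  apply/matrixP => i j; move/matrixP: Ec => /(_ i j); move/matrixP: Em => /(_ i j).
  rewrite /path !mxE => h1 h2.
  have hm : m i j = (x i j + q i j) / 2 by lra.
  rewrite hm in h2.
  have E' : L * (r i j - x i j) = sv * (q i j - x i j) by lra.
  have -> : sv / L * (q i j - x i j) = (sv * (q i j - x i j)) / L by rewrite mulrAC.
  by rewrite -E' mulrC mulKf ?gt_eqF //; ring.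
- have [r [Hr Hmr]] := qdist_attain m r0.
  rewrite dmr0 ltr0_norm ?subr_lt0 // opprB in Hmr.
  have dry : qdist (gorbit G r) (gorbit G y) = L - sv.
    have := Hdist s (mkI hE); rewrite Hr0 gE /= (orbit_eq Hr) => ->.
    by rewrite ler0_norm ?subr_le0 // opprB.
  have [y2 [Hy2 Hry]] := qdist_attain r y.
  rewrite dry in Hry.
  have Ly2 : L <= enorm (y2 - x).
    by rewrite enormB; exact: qdist_le (orbit_self x) Hy2.
  have t1 := @enorm_tri3 R d m r y2.
  have t2 := @enorm_tri3 R d x m y2.
  rewrite [enorm (r - m)]enormB -Hmr [enorm (y2 - r)]enormB -Hry in t1.
  rewrite d1 in t2.
  have d3 : enorm (y2 - m) = L / 2 by lra.
  have Ey2 : m - x = y2 - m.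
    apply: (col3 d1 d3); first by rewrite divr_gt0.
    by rewrite (_ : L/2 + L/2 = L) //; field.
  have ey2 : y2 = q.
    apply/matrixP => i j; move/matrixP: Ey2 => /(_ i j); move/matrixP: Em => /(_ i j).
    rewrite !mxE => h1 h2; lra.
  rewrite ey2 in Hry.
  have C := @collinear R d (r - m) (q - r) (sv - L/2) (L - sv).
  have := C (etrans (@enormB R d r m) (esym Hmr)) (etrans (@enormB R d q r) (esym Hry)).
  rewrite (_ : r - m + (q - r) = q - m); last by apply/matrixP => i j; rewrite !mxE; ring.
  rewrite d2 (_ : sv - L/2 + (L - sv) = L/2); last by lra.
  move=> /(_ (lexx _)) Ec.
  exists r; split => //.
  apply/matrixP => i j; move/matrixP: Ec => /(_ i j); move/matrixP: Em => /(_ i j).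
  rewrite /path !mxE => h1 h2.
  have hm : m i j = (x i j + q i j) / 2 by lra.
  rewrite hm in h2.
  have E' : L * (r i j - x i j) = sv * (q i j - x i j) by lra.
  have -> : sv / L * (q i j - x i j) = (sv * (q i j - x i j)) / L by rewrite mulrAC.
  by rewrite -E' mulrC mulKf ?gt_eqF //; ring.
Qed.

End Grp.

Lemma stab_orbit_eq (R : realType) (d : nat) (G : set 'M[R]_d) (HG : subgroup_Od G)
  (x p : 'cV[R]_d) g : stab G x g ->
  [set h *m (g *m p) | h in stab G x] = [set h *m p | h in stab G x].
Proof.
move=> [Gg gx]; apply/seteqP; split => _ [h [Gh hx] <-].
  exists (h *m g); last by rewrite mulmxA.
  by split; [exact: (@GM _ _ _ HG) | rewrite -mulmxA gx].
exists (h *m g^T); last by rewrite -mulmxA (mulmxA g^T) (@G_orth _ _ _ HG _ Gg) mul1mx.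
split; first by apply: (@GM _ _ _ HG) => //; exact: (@GT _ _ _ HG).
by rewrite -mulmxA -{1}gx (mulmxA g^T) (@G_orth _ _ _ HG _ Gg) mul1mx.
Qed.

Theorem lemma40 (R : realType) (d : nat) (G : set 'M[R]_d)
  (HG : subgroup_Od G) (Hcl : closed_orbits G) (x y : 'cV[R]_d) :
  exists f : (Icc (qdist (gorbit G x) (gorbit G y)) -> set 'cV[R]_d) ->
             set 'cV[R]_d,
    set_bij (geodesics G (gorbit G x) (gorbit G y)) (stab_orbits G x y) f.
Proof.
pose P := fun (gam : Icc (qdist (gorbit G x) (gorbit G y)) -> set 'cV[R]_d) q =>
  argmin_orbit G x y q /\ gam = @gamma R d G x y q.
pose pick := fun gam => match pselect (exists q, P gam q) with
  | left H => proj1_sig (cid H) | right _ => 0 end.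
have pickP : forall gam, (exists q, P gam q) -> P gam (pick gam).
  move=> gam H; rewrite /pick; case: pselect => [H'|//].
  exact: (proj2_sig (cid H')).
exists (fun gam => [set g *m pick gam | g in stab G x]).
have geoP : forall gam, geodesics G (gorbit G x) (gorbit G y) gam -> P gam (pick gam).
  by move=> gam Hg; apply: pickP; exact: (@geo_gamma _ _ _ HG Hcl _ _ _ Hg).
split.
- move=> gam Hg; have [Ha _] := geoP gam Hg.
  by exists (pick gam).
- move=> g1 g2; rewrite !inE => H1 H2 E.
  have [_ E1] := geoP _ H1; have [_ E2] := geoP _ H2.
  have : [set g *m pick g2 | g in stab G x] (pick g1).
    by rewrite -E; exists 1%:M; [split; [exact: (@G1 _ _ _ HG) | rewrite mul1mx] | rewrite mul1mx].
  case=> h Hh Hp.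
  by rewrite E1 E2 -Hp (@gamma_stab _ _ _ HG _ _ _ _ Hh).
- move=> O [q [Hq ->]].
  have Hgeo := @gamma_geo _ _ _ HG Hcl _ _ _ Hq.
  exists (@gamma R d G x y q) => //.
  have [Hp Ep] := geoP _ Hgeo.
  have [g [Hg Eq]] := @gamma_inj _ _ _ HG Hcl _ _ _ _ Hq Hp Ep.
  by rewrite [in RHS]Eq (@stab_orbit_eq _ _ _ HG _ _ _ Hg).
Qed.
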